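(* Let $I$ be an infinite set of positive integers and for $i \in I$ let $G_i$ be a finite group and $H_i \le G_i$ a subgroup, with $|G_i| \to \infty$. Assume $|H_i|$ is superpolylogarithmic: for every constant $c>0$, $|H_i| \ge (\log|G_i|)^{c}$ for all sufficiently large $i \in I$. Let $X_i$ be the set of right cosets of $H_i$ in $G_i$ and $r_i$ the number of orbits of $H_i$ on $X_i$. (a) If there is a constant $c_0>0$ such that the average subdegree satisfies $|X_i|/r_i \le (\log|G_i|)^{c_0}$ for all sufficiently large $i \in I$, then the family $(G_i,H_i)_{i\in I}$ is distinguishable. (b) In particular, if there is a constant $c_0>0$ such that $|H_i : H_i \cap gH_ig^{-1}| \le (\log|G_i|)^{c_0}$ for all $g \in G_i$ and all sufficiently large $i \in I$, then the family $(G_i,H_i)_{i\in I}$ is distinguishable.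
   Context: For a finite group $G$, let $\mathrm{Irr}(G)$ be its set of complex irreducible characters and $d_\chi=\chi(e)$. For $H \le G$ let $D_H = \frac{1}{|G|}\sum_{\chi \in \mathrm{Irr}(G)} d_\chi \big|\sum_{h \in H, h \neq e}\chi(h)\big|$ (the $L_1$ distance between the distributions $P_H(\chi)=\frac{d_\chi}{|G|}\sum_{h\in H}\chi(h)$ and $P_{\{e\}}$ on $\mathrm{Irr}(G)$ produced by weak quantum Fourier sampling). A family $(G_i,H_i)_{i \in I}$ with $H_i \le G_i$, $I$ an infinite set of positive integers and $|G_i| \to \infty$, is called distinguishable if there is a constant $c>0$ such that $D_{H_i} \ge (\log|G_i|)^{-c}$ for all sufficiently large $i \in I$, and indistinguishable otherwise. $G$ acts on the set $X = G/H$ of right cosets of $H$ by right multiplication; the suborbits are the orbits of $H$ on $X$, the subdegrees are their sizes, and the rank $r_X(G)$ is the number of suborbits, so the average subdegree is $|G:H|/r_X(G)$. *)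

(* Defs.v *)
From HB Require Import structures.
From mathcomp Require Import all_boot all_order all_algebra all_fingroup all_solvable all_field all_character.
From mathcomp Require Import classical_sets reals exp.
Set Implicit Arguments. Unset Strict Implicit. Unset Printing Implicit Defensive.
Import Order.TTheory GRing.Theory Num.Theory.
Local Open Scope ring_scope.

Definition algC_to_real (R : realType) (z : algC) : R :=
  sup [set (ratr q : R) | q in [set q : rat | (ratr q : algC) <= 'Re z]%classic].

Definition DH (gT : finGroupType) (G H : {group gT}) : algC :=
  (#|G|%:R)^-1 * \sum_(i < Nirr G)
     'chi[G]_i 1%g * `| \sum_(h in H | h != 1%g) 'chi[G]_i h |.

Definition cosetsX (gT : finGroupType) (G H : {group gT}) := rcosets H G.
Definition rankX (gT : finGroupType) (G H : {group gT}) : nat :=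
  #|[set orbit 'Rs H Hx | Hx in rcosets H G]|.

Definition eventually_in (I : nat -> Prop) (P : nat -> Prop) : Prop :=
  exists N : nat, forall i, I i -> (N <= i)%N -> P i.

Definition distinguishable (R : realType) (I : nat -> Prop)
    (gT : nat -> finGroupType) (G H : forall i, {group gT i}) : Prop :=
  exists c : R, 0 < c /\
    eventually_in I (fun i =>
      (ln (#|G i|%:R : R)) `^ (- c) <= algC_to_real R (DH (G i) (H i))).

(* Main.v *)
Require Import Defs.
From HB Require Import structures.
From mathcomp Require Import all_boot all_order all_algebra all_fingroup all_solvable all_field all_character.
From mathcomp Require Import classical_sets reals exp.
From mathcomp Require Import ring lra.
Import Order.TTheory GRing.Theory Num.Theory.
Local Open Scope ring_scope.

Section Core.
Variables (gT : finGroupType) (G H : {group gT}).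
Hypothesis sHG : H \subset G.

Lemma fixRs (h i : gT) : (rcoset H i \in 'Fix_'Rs[h])%g = ((h ^ i^-1)%g \in H).
Proof.
rewrite rcosetE; apply/afix1P/idP => /=.
  rewrite rcosetE -rcosetM => /rcoset_eqP.
  by rewrite mem_rcoset conjgE invgK mulgA.
move=> hH; rewrite rcosetE -rcosetM; apply/rcoset_eqP.
by rewrite mem_rcoset; move: hH; rewrite conjgE invgK mulgA.
Qed.

Lemma card_setI_sum (T : finType) (A B : {set T}) :
  #|A :&: B| = (\sum_(x in A) (x \in B))%N.
Proof.
rewrite -big_mkcondr sum1_card; apply: eq_card => x.
by rewrite inE.
Qed.

Lemma fix_count (h : gT) : h \in H ->
  (\sum_(y in G) ((h ^ y)%g \in H))%N = (#|H| * #|('Fix_(rcosets H G | 'Rs)[h])%g|)%N.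
Proof.
move=> Hh.
rewrite (reindex_inj invg_inj) /=.
rewrite (eq_bigl (fun y => y \in G)) => [|y]; last by rewrite groupV.
rewrite (partition_big_imset (rcoset H)) /=.
rewrite card_setI_sum big_distrr /=.
apply: eq_bigr => C /imsetP[x Gx ->].
rewrite (eq_bigr (fun _ => (rcoset H x \in 'Fix_'Rs[h])%g : nat)) => [|i /andP[Gi /eqP <-]]; last first.
  by rewrite fixRs.
rewrite sum_nat_const; congr (_ * _)%N.
rewrite -(card_rcoset H x) -rcosetE; apply: eq_card => i; rewrite [in LHS]unfold_in /= !rcosetE.
apply/andP/idP => [[Gi /eqP <-]|]; first by rewrite rcoset_refl.
move=> Hxi; split; last by apply/eqP/rcoset_eqP.
by move: Hxi; rewrite mem_rcoset => /(fintype.subsetP sHG) Gk; rewrite -(mulgKV x i) groupM.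
Qed.

Let theta := 'Ind[G] (1 : 'CF(H)).
Let m (i : Iirr G) := '['Res[H] 'chi[G]_i, 1]_H.

Lemma m_nat i : m i \in Num.nat.
Proof. by apply: Cnat_cfdot_char; [apply: cfRes_char; apply: irr_char | apply: cfun1_char]. Qed.

Lemma sumH (phi : 'CF(G)) : \sum_(h in H) phi h = #|H|%:R * '['Res[H] phi, 1]_H.
Proof.
rewrite cfdotE mulrA mulfV ?neq0CG // mul1r; apply: eq_bigr => h Hh.
by rewrite cfResE // cfun1E Hh conjC1 mulr1.
Qed.

Lemma m_le i : m i <= 'chi_i 1%g.
Proof.
have H0 : 0 < #|H|%:R :> algC by apply: gt0CG.
rewrite -(ler_pM2l H0) -(ger0_norm (natr_ge0 (m_nat i))).
rewrite -[X in X * _ <= _](ger0_norm (ltW H0)) -normrM /m -sumH.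
apply: le_trans (ler_norm_sum _ _ _) _.
have -> : #|H|%:R * 'chi_i 1%g = \sum_(h in H) 'chi_i 1%g by rewrite sumr_const mulr_natl.
by apply: ler_sum => h _; apply: char1_ge_norm (irr_char i).
Qed.

Lemma theta1 : theta 1%g = #|G : H|%g%:R.
Proof. by rewrite cfInd1 // cfun1E group1 mulr1. Qed.

Lemma theta_dot i : '[theta, 'chi_i] = m i.
Proof. by rewrite cfdotC /m cfdot_Res_l conj_natr // -cfdot_Res_l m_nat. Qed.

Lemma sum_md : \sum_i m i * 'chi_i 1%g = #|G : H|%g%:R.
Proof.
rewrite -theta1 {1}(cfun_sum_cfdot theta) sum_cfunE; apply: eq_bigr => i _.
by rewrite cfunE theta_dot.
Qed.



Lemma theta_h h : h \in H -> theta h = #|('Fix_(rcosets H G | 'Rs)[h])%g|%:R.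
Proof.
move=> Hh; rewrite cfIndE //.
rewrite (eq_bigr (fun y => (((h ^ y)%g \in H) : nat)%:R)) => [|y _]; last by rewrite cfun1E.
rewrite -natr_sum fix_count // natrM mulrA mulVf ?neq0CG // mul1r.
done.
Qed.

Lemma sum_m2 : \sum_i m i ^+ 2 = #|[set orbit 'Rs H x | x in rcosets H G]|%:R.
Proof.
have -> : \sum_i m i ^+ 2 = '[theta, theta].
  by rewrite cfdot_sum_irr; apply: eq_bigr => i _; rewrite theta_dot conj_natr ?m_nat // expr2.
have H0 : #|H|%:R != 0 :> algC by apply: neq0CG.
apply: (mulfI H0).
rewrite -cfdot_Res_l -sumH (eq_bigr _ theta_h) -natr_sum.
rewrite Frobenius_Cauchy; last by apply: fintype.subset_trans sHG (actsRs_rcosets H G).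
by rewrite natrM mulrC.
Qed.


Lemma DH_ge : #|[set orbit 'Rs H x | x in rcosets H G]|%:R / #|G : H|%g%:R - #|H|%:R^-1 <= DH G H.
Proof.
set r := #|[set orbit 'Rs H x | x in rcosets H G]|.
have S_eq i : \sum_(h in H | h != 1%g) 'chi[G]_i h = #|H|%:R * m i - 'chi_i 1%g.
  by rewrite /m -sumH [X in _ = X - _](bigD1 1%g) //= addrC addrK.
have key : \sum_(i < Nirr G) m i * (#|H|%:R * m i - 'chi_i 1%g)
    <= \sum_(i < Nirr G) 'chi[G]_i 1%g * `| \sum_(h in H | h != 1%g) 'chi[G]_i h |.
  apply: ler_sum => i _; rewrite S_eq.
  have mR : m i \is Num.real by apply: ger0_real (natr_ge0 (m_nat i)).
  have cR : 'chi_i 1%g \is Num.real by apply: ger0_real (ltW (irr1_gt0 i)).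
  apply: le_trans (ler_wpM2l (natr_ge0 (m_nat i)) (real_ler_norm _)) _.
    by rewrite rpredB // rpredM // realn.
  by apply: ler_wpM2r; [apply: normr_ge0 | apply: m_le].
have E : \sum_(i < Nirr G) m i * (#|H|%:R * m i - 'chi_i 1%g) = #|H|%:R * r%:R - #|G : H|%g%:R.
  rewrite -sum_md -sum_m2 -/r mulr_sumr -sumrB; apply: eq_bigr => i _.
  by rewrite mulrBr mulrCA expr2.
rewrite E in key.
rewrite /DH; apply: le_trans (ler_wpM2l _ key); last by rewrite invr_ge0 ler0n.
have GHn := Lagrange sHG.
rewrite -GHn natrM.
have h0 : #|H|%:R != 0 :> algC by apply: neq0CG.
have i0 : #|G : H|%g%:R != 0 :> algC by rewrite pnatr_eq0 -lt0n indexg_gt0.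
have -> : (#|H|%:R * #|G : H|%g%:R)^-1 * (#|H|%:R * r%:R - #|G : H|%g%:R) = r%:R / #|G : H|%g%:R - #|H|%:R^-1 :> algC by field; apply/andP.
done.
Qed.


Lemma orbit_card x : #|orbit 'Rs H (rcoset H x)| = #|H : H :&: H :^ x|%g.
Proof.
rewrite card_orbit; congr (#|_ : _|%g); apply/finset.setP => h; rewrite !finset.in_setI.
apply/andb_id2l => Hh.
transitivity (rcoset H x \in 'Fix_'Rs[h])%g; first by rewrite finset.in_setT /= !inE !finset.sub1set !inE.
by rewrite fixRs -mem_conjgV invgK.
Qed.

Lemma avg_bound (R : realType) (B : R) :
  (forall g, g \in G -> (#|H : H :&: (H :^ g^-1)|%g%:R : R) <= B) ->
  (#|G : H|%g%:R : R) <= #|[set orbit 'Rs H x | x in rcosets H G]|%:R * B.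
Proof.
move=> hB.
have acts : [acts H, on rcosets H G | 'Rs] by apply: fintype.subset_trans sHG (actsRs_rcosets H G).
rewrite /indexg (card_partition (orbit_partition acts)) natr_sum.
rewrite mulr_natl -sumr_const; apply: ler_sum => A /imsetP[C /imsetP[x Gx ->] ->].
rewrite orbit_card.
by have := hB (x^-1)%g; rewrite groupV invgK; apply.
Qed.

Lemma rank_gt0 : (0 < #|[set orbit 'Rs H x | x in rcosets H G]|)%N.
Proof.
apply/card_gt0P; exists (orbit 'Rs H (H :* 1)%g).
apply: imset_f; rewrite mem_rcosets; exact: (fintype.subsetP (mulG_subr H G)) _ (group1 G).
Qed.

End Core.

Lemma to_real_ge (R : realType) (z : algC) (q : rat) :
  (ratr q : algC) <= z -> (ratr q : R) <= algC_to_real R z.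
Proof.
move=> qz.
have zR : z \is Num.real.
  have -> : z = (z - ratr q) + ratr q by rewrite subrK.
  rewrite rpredD //; first by rewrite ger0_real // subr_ge0.
  by rewrite realE ler0q lerq0 le_total.
have Rez : 'Re z = z by apply/Creal_ReP.
rewrite /algC_to_real; apply: sup_upper_bound; last first.
  by exists q => //=; rewrite Rez.
split; first by exists (ratr q); exists q => //=; rewrite Rez.
have zb := archi_boundP (normr_ge0 z).
exists (Num.bound `|z|)%:R => _ [q' /= q'z <-].
rewrite -(ratr_nat R) ler_rat -(ler_rat algC) ratr_nat.
rewrite Rez in q'z; apply: le_trans q'z _.
exact: le_trans (real_ler_norm zR) (ltW zb).
Qed.

Lemma final_ineq (R : realType) (L c0 X r h : R) : 2 <= L -> 0 < c0 -> 0 < X -> 0 < r ->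
  X / r <= L `^ c0 -> L `^ (c0 + 1) <= h -> L `^ (- (c0 + 1)) <= r / X - h^-1.
Proof.
move=> L2 c0p Xp rp hX hH.
have Lp : 0 < L by apply: lt_le_trans L2; lra.
have Ap : 0 < L `^ c0 by apply: powR_gt0.
move: hX hH; set A := L `^ c0 => hX hH.
have E : L `^ (c0 + 1) = A * L.
  by rewrite powRD ?powRr1 ?ltW // (gt_eqF Lp) implybT.
rewrite powRN E; rewrite E in hH.
have ALp : 0 < A * L by apply: mulr_gt0.
have hp : 0 < h by apply: lt_le_trans hH.
have h1 : h^-1 <= (A * L)^-1 by rewrite lef_pV2 // posrE.
have h2 : A^-1 <= r / X.
  by rewrite -invf_div lef_pV2 // posrE // divr_gt0.
have h3 : 2 * (A * L)^-1 <= A^-1.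
  rewrite invfM mulrCA -[X in _ <= X]mulr1 ler_pM2l ?invr_gt0 //.
  by rewrite ler_pdivrMr // mul1r.
lra.
Qed.


Lemma partA (R : realType) (I : nat -> Prop)
  (gT : nat -> finGroupType) (G H : forall i, {group gT i}) :
  (forall i, I i -> H i \subset G i) ->
  (forall M : nat, eventually_in I (fun i => (M <= #|G i|)%N)) ->
  (forall c : R, 0 < c ->
     eventually_in I (fun i => (ln (#|G i|%:R : R)) `^ c <= (#|H i|%:R : R))) ->
  ((exists c0 : R, 0 < c0 /\
      eventually_in I (fun i =>
        (#|cosetsX (G i) (H i)|%:R : R) / (rankX (G i) (H i))%:R
          <= (ln (#|G i|%:R : R)) `^ c0)) ->
    distinguishable R I G H).
Proof.
move=> sub hG hH [c0 [c0p [N3 hN3]]].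
exists (c0 + 1); split; first lra.
have [M hM] : exists M : nat, sequences.expR 2 <= (M%:R : R).
  by exists (Num.bound (sequences.expR (2 : R))); apply: ltW; apply: archi_boundP; apply: expR_ge0.
have [N1 hN1] := hG M.
have [N2 hN2] := hH (c0 + 1) ltac:(lra).
exists (maxn N1 (maxn N2 N3)) => i Ii le.
have le1 : (N1 <= i)%N by apply: leq_trans le; apply: leq_maxl.
have le2 : (N2 <= i)%N by apply: leq_trans le; rewrite leq_max leq_maxl orbT.
have le3 : (N3 <= i)%N by apply: leq_trans le; rewrite leq_max leq_maxr orbT.
have sHG := sub i Ii.
have Gpos : (0 : R) < #|G i|%:R by rewrite ltr0n cardG_gt0.
have L2 : (2 : R) <= ln (#|G i|%:R : R).
  rewrite -[X in X <= _](expRK 2) ler_ln ?posrE ?expR_gt0 //.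
  by apply: le_trans hM _; rewrite ler_nat; apply: hN1.
have Xp : (0 : R) < #|cosetsX (G i) (H i)|%:R by rewrite ltr0n /cosetsX -/(indexg _ _) indexg_gt0.
have rp : (0 : R) < (rankX (G i) (H i))%:R by rewrite ltr0n; apply: rank_gt0.
apply: le_trans (final_ineq _ _ _ _ _ _ L2 c0p Xp rp (hN3 i Ii le3) (hN2 i Ii le2)) _.
pose q : rat := (rankX (G i) (H i))%:R / #|cosetsX (G i) (H i)|%:R - (#|H i|%:R)^-1.
have qE (F : numFieldType) : ratr q = (rankX (G i) (H i))%:R / #|cosetsX (G i) (H i)|%:R - (#|H i|%:R)^-1 :> F.
  by rewrite /q rmorphB /= fmorph_div fmorphV /= !ratr_nat.
rewrite -qE; apply: to_real_ge; rewrite qE.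
exact: DH_ge.
Qed.

Theorem theorem5 (R : realType) (I : nat -> Prop)
  (gT : nat -> finGroupType) (G H : forall i, {group gT i}) :
  (forall N : nat, exists i, I i /\ (N < i)%N) ->
  (forall i, I i -> (0 < i)%N) ->
  (forall i, I i -> H i \subset G i) ->
  (forall M : nat, eventually_in I (fun i => (M <= #|G i|)%N)) ->
  (forall c : R, 0 < c ->
     eventually_in I (fun i => (ln (#|G i|%:R : R)) `^ c <= (#|H i|%:R : R))) ->
  ((exists c0 : R, 0 < c0 /\
      eventually_in I (fun i =>
        (#|cosetsX (G i) (H i)|%:R : R) / (rankX (G i) (H i))%:R
          <= (ln (#|G i|%:R : R)) `^ c0)) ->
    distinguishable R I G H)
  /\
  ((exists c0 : R, 0 < c0 /\
      eventually_in I (fun i => forall g, g \in G i ->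
        ((#|H i : H i :&: (H i :^ g^-1)|)%g%:R : R) <= (ln (#|G i|%:R : R)) `^ c0)) ->
    distinguishable R I G H).
Proof.
move=> _ _ sub hG hH; split; first exact: partA.
move=> [c0 [c0p [N hN]]]; apply: partA => //.
exists c0; split => //; exists N => i Ii le.
have hb := hN i Ii le.
have rp : (0 : R) < (rankX (G i) (H i))%:R by rewrite ltr0n; apply: rank_gt0; apply: sub.
rewrite ler_pdivrMr // mulrC.
exact: (@avg_bound _ _ _ (sub i Ii) _ _ hb).
Qed.
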